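(* The real vector space with basis $J,H,G_a,P_a,J_a,H_a,G_{ab},P_{ab},J^*,H^*,J^*_a,H^*_a$ with the following nonzero brackets is a Lie algebra (the double extension of $\operatorname{span}\{P_a,G_a,P_{ab},G_{ab}\}$ by $\operatorname{span}\{H,J,H_a,J_a\}$): $[J,G_a]=\epsilon_{am}G_m$, $[J,P_a]=\epsilon_{am}P_m$, $[G_a,H]=-\epsilon_{am}P_m$, $[G_a,G_b]=\epsilon_{ab}H^*$, $[P_a,G_b]=\epsilon_{ab}J^*$; $[J,J_a]=\epsilon_{am}J_m$, $[J,G_{ab}]=-\epsilon_{m(a}G_{b)m}$, $[J,H_a]=\epsilon_{am}H_m$, $[J,P_{ab}]=-\epsilon_{m(a}P_{b)m}$, $[G_a,J_b]=-(\epsilon_{am}G_{bm}+\epsilon_{ab}G_{mm})$, $[G_a,H_b]=-(\epsilon_{am}P_{bm}+\epsilon_{ab}P_{mm})$, $[H,J_a]=\epsilon_{am}H_m$, $[H,G_{ab}]=-\epsilon_{m(a}P_{b)m}$, $[P_a,J_b]=-(\epsilon_{am}P_{bm}+\epsilon_{ab}P_{mm})$; $[J_a,J_b]=\epsilon_{ab}J$, $[J_a,G_{bc}]=\delta_{a(b}\epsilon_{c)m}G_m$, $[J_a,H_b]=\epsilon_{ab}H$, $[J_a,P_{bc}]=\delta_{a(b}\epsilon_{c)m}P_m$, $[G_{ab},H_c]=-\delta_{c(a}\epsilon_{b)m}P_m$; $[G_{ab},G_{cd}]=\epsilon_{(a(c}\delta_{d)b)}H^*$, $[P_{ab},G_{cd}]=\epsilon_{(a(c}\delta_{d)b)}J^*$,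 $[P_a,G_{bc}]=\epsilon_{a(b}J^*_{c)}$, $[G_a,G_{bc}]=\epsilon_{a(b}H^*_{c)}$, $[G_a,P_{bc}]=\epsilon_{a(b}J^*_{c)}$; $[J,H^*_a]=\epsilon_{am}H^*_m$, $[J,J^*_a]=\epsilon_{am}J^*_m$, $[H,H^*_a]=\epsilon_{am}J^*_m$, $[J_a,J^*]=-\epsilon_{am}J^*_m$, $[J_a,H^*]=-\epsilon_{am}H^*_m$, $[J_a,J^*_b]=\epsilon_{ab}J^*$, $[J_a,H^*_b]=\epsilon_{ab}H^*$, $[H_a,H^*]=-\epsilon_{am}J^*_m$, $[H_a,H^*_b]=\epsilon_{ab}J^*$. It admits the invariant metric with nonzero entries $\langle P_a,G_b\rangle=\delta_{ab}$, $\langle P_{ab},G_{cd}\rangle=\delta_{a(c}\delta_{d)b}-\tfrac23\delta_{ab}\delta_{cd}$, $\langle H,H^*\rangle=1$, $\langle J,J^*\rangle=1$, $\langle H_a,H^*_b\rangle=\delta_{ab}$, $\langle J_a,J^*_b\rangle=\delta_{ab}$. The subspace $\operatorname{span}\{H,J,P_a,G_a,H^*,J^*\}$ is a subalgebra isomorphic to the Extended Bargmann algebra.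
   Context: Indices $a,b,c,d,m\in\{1,2\}$, summed when repeated, $\epsilon_{12}=1$; $G_{ab},P_{ab}$ symmetric. Symmetrization without normalization ($T_{(ab)}=T_{ab}+T_{ba}$, nested from outermost to innermost). An invariant metric is a symmetric nondegenerate bilinear form with $\langle[Z,X],Y\rangle+\langle X,[Z,Y]\rangle=0$. The Extended Bargmann algebra has basis $J,H,G_a,P_a,J^*,H^*$ and nonzero brackets $[J,G_a]=\epsilon_{am}G_m$, $[J,P_a]=\epsilon_{am}P_m$, $[G_a,G_b]=\epsilon_{ab}H^*$, $[G_a,H]=-\epsilon_{am}P_m$, $[G_a,P_b]=\epsilon_{ab}J^*$. *)

(* Defs.v *)
From HB Require Import structures.
From mathcomp Require Import all_boot all_order all_algebra.
Set Implicit Arguments. Unset Strict Implicit. Unset Printing Implicit Defensive.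
Import Order.TTheory GRing.Theory Num.Theory.
Local Open Scope ring_scope.

(* Generators of the 22-dimensional algebra.  gGs a b / gPs a b are the
   symmetric generators G_ab / P_ab (gGs a b and gGs b a denote the same
   basis vector); gJs, gHs are J^*, H^*; gJsa a, gHsa a are J^*_a, H^*_a. *)
Inductive gen :=
  | gJ | gH | gG of 'I_2 | gP of 'I_2 | gJa of 'I_2 | gHa of 'I_2
  | gGs of 'I_2 & 'I_2 | gPs of 'I_2 & 'I_2
  | gJs | gHs | gJsa of 'I_2 | gHsa of 'I_2.

(* index of the symmetric pair {a,b} among 11,12,22 *)
Definition symidx (a b : 'I_2) : nat := (nat_of_ord a + nat_of_ord b)%N.

Definition idx (g : gen) : 'I_22 :=
  match g with
  | gJ => inord 0 | gH => inord 1
  | gG a => inord (2 + a) | gP a => inord (4 + a)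
  | gJa a => inord (6 + a) | gHa a => inord (8 + a)
  | gGs a b => inord (10 + symidx a b) | gPs a b => inord (13 + symidx a b)
  | gJs => inord 16 | gHs => inord 17
  | gJsa a => inord (18 + a) | gHsa a => inord (20 + a)
  end.

Definition i2 (k : nat) : 'I_2 := inord k.
Definition symgen (f : 'I_2 -> 'I_2 -> gen) (s : nat) : gen :=
  f (i2 (s %/ 2)) (i2 (minn s 1)).

Definition dec (i : 'I_22) : gen :=
  let k := nat_of_ord i in
  if k == 0%N then gJ else if k == 1%N then gH
  else if (k < 4)%N then gG (i2 (k - 2))
  else if (k < 6)%N then gP (i2 (k - 4))
  else if (k < 8)%N then gJa (i2 (k - 6))
  else if (k < 10)%N then gHa (i2 (k - 8))
  else if (k < 13)%N then symgen gGs (k - 10)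
  else if (k < 16)%N then symgen gPs (k - 13)
  else if k == 16%N then gJs else if k == 17%N then gHs
  else if (k < 20)%N then gJsa (i2 (k - 18))
  else gHsa (i2 (k - 20)).

Inductive egen := eJ | eH | eG of 'I_2 | eP of 'I_2 | eJs | eHs.

Definition eidx (g : egen) : 'I_8 :=
  match g with
  | eJ => inord 0 | eH => inord 1 | eG a => inord (2 + a) | eP a => inord (4 + a)
  | eJs => inord 6 | eHs => inord 7
  end.

Definition edec (i : 'I_8) : egen :=
  let k := nat_of_ord i in
  if k == 0%N then eJ else if k == 1%N then eH
  else if (k < 4)%N then eG (i2 (k - 2))
  else if (k < 6)%N then eP (i2 (k - 4))
  else if k == 6%N then eJs else eHs.

Section Algebra.
Variable R : realFieldType.

Definition eps (a b : 'I_2) : R :=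
  if a == b then 0 else if a == ord0 then 1 else -1.
Definition delta (a b : 'I_2) : R := (a == b)%:R.

Definition bil n (f : 'I_n -> 'I_n -> 'rV[R]_n) (x y : 'rV[R]_n) : 'rV[R]_n :=
  \sum_(i < n) \sum_(j < n) (x 0 i * y 0 j) *: f i j.
Definition bilf n (f : 'I_n -> 'I_n -> R) (x y : 'rV[R]_n) : R :=
  \sum_(i < n) \sum_(j < n) x 0 i * y 0 j * f i j.

Definition antisym_ext T (V : zmodType) (t : T -> T -> option V) (x y : T) : V :=
  match t x y with
  | Some v => v
  | None => match t y x with Some v => - v | None => 0 end
  end.
Definition sym_ext T (t : T -> T -> option R) (x y : T) : R :=
  match t x y with
  | Some v => v
  | None => match t y x with Some v => v | None => 0 end
  end.

Definition e (g : gen) : 'rV[R]_22 := delta_mx 0 (idx g).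

(* eps_{(a(c} delta_{d)b)} *)
Definition epsdel (a b c d : 'I_2) : R :=
  eps a c * delta d b + eps a d * delta c b + eps b c * delta d a + eps b d * delta c a.

Definition tbl (x y : gen) : option 'rV[R]_22 :=
  match x, y with
  | gJ, gG a => Some (\sum_(m < 2) eps a m *: e (gG m))
  | gJ, gP a => Some (\sum_(m < 2) eps a m *: e (gP m))
  | gG a, gH => Some (- \sum_(m < 2) eps a m *: e (gP m))
  | gG a, gG b => Some (eps a b *: e gHs)
  | gP a, gG b => Some (eps a b *: e gJs)
  | gJ, gJa a => Some (\sum_(m < 2) eps a m *: e (gJa m))
  | gJ, gGs a b => Some (- \sum_(m < 2) (eps m a *: e (gGs b m) + eps m b *: e (gGs a m)))
  | gJ, gHa a => Some (\sum_(m < 2) eps a m *: e (gHa m))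
  | gJ, gPs a b => Some (- \sum_(m < 2) (eps m a *: e (gPs b m) + eps m b *: e (gPs a m)))
  | gG a, gJa b => Some (- \sum_(m < 2) (eps a m *: e (gGs b m) + eps a b *: e (gGs m m)))
  | gG a, gHa b => Some (- \sum_(m < 2) (eps a m *: e (gPs b m) + eps a b *: e (gPs m m)))
  | gH, gJa a => Some (\sum_(m < 2) eps a m *: e (gHa m))
  | gH, gGs a b => Some (- \sum_(m < 2) (eps m a *: e (gPs b m) + eps m b *: e (gPs a m)))
  | gP a, gJa b => Some (- \sum_(m < 2) (eps a m *: e (gPs b m) + eps a b *: e (gPs m m)))
  | gJa a, gJa b => Some (eps a b *: e gJ)
  | gJa a, gGs b c => Some (\sum_(m < 2) (delta a b * eps c m + delta a c * eps b m) *: e (gG m))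
  | gJa a, gHa b => Some (eps a b *: e gH)
  | gJa a, gPs b c => Some (\sum_(m < 2) (delta a b * eps c m + delta a c * eps b m) *: e (gP m))
  | gGs a b, gHa c => Some (- \sum_(m < 2) (delta c a * eps b m + delta c b * eps a m) *: e (gP m))
  | gGs a b, gGs c d => Some (epsdel a b c d *: e gHs)
  | gPs a b, gGs c d => Some (epsdel a b c d *: e gJs)
  | gP a, gGs b c => Some (eps a b *: e (gJsa c) + eps a c *: e (gJsa b))
  | gG a, gGs b c => Some (eps a b *: e (gHsa c) + eps a c *: e (gHsa b))
  | gG a, gPs b c => Some (eps a b *: e (gJsa c) + eps a c *: e (gJsa b))
  | gJ, gHsa a => Some (\sum_(m < 2) eps a m *: e (gHsa m))
  | gJ, gJsa a => Some (\sum_(m < 2) eps a m *: e (gJsa m))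
  | gH, gHsa a => Some (\sum_(m < 2) eps a m *: e (gJsa m))
  | gJa a, gJs => Some (- \sum_(m < 2) eps a m *: e (gJsa m))
  | gJa a, gHs => Some (- \sum_(m < 2) eps a m *: e (gHsa m))
  | gJa a, gJsa b => Some (eps a b *: e gJs)
  | gJa a, gHsa b => Some (eps a b *: e gHs)
  | gHa a, gHs => Some (- \sum_(m < 2) eps a m *: e (gJsa m))
  | gHa a, gHsa b => Some (eps a b *: e gJs)
  | _, _ => None
  end.

Definition br : 'rV[R]_22 -> 'rV[R]_22 -> 'rV[R]_22 :=
  bil (fun i j => antisym_ext tbl (dec i) (dec j)).

Definition mtbl (x y : gen) : option R :=
  match x, y with
  | gP a, gG b => Some (delta a b)
  | gPs a b, gGs c d =>
      Some (delta a c * delta d b + delta a d * delta c b - 2 / 3 * delta a b * delta c d)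
  | gH, gHs => Some 1
  | gJ, gJs => Some 1
  | gHa a, gHsa b => Some (delta a b)
  | gJa a, gJsa b => Some (delta a b)
  | _, _ => None
  end.

Definition met : 'rV[R]_22 -> 'rV[R]_22 -> R :=
  bilf (fun i j => sym_ext mtbl (dec i) (dec j)).

Definition ee (g : egen) : 'rV[R]_8 := delta_mx 0 (eidx g).

Definition etbl (x y : egen) : option 'rV[R]_8 :=
  match x, y with
  | eJ, eG a => Some (\sum_(m < 2) eps a m *: ee (eG m))
  | eJ, eP a => Some (\sum_(m < 2) eps a m *: ee (eP m))
  | eG a, eG b => Some (eps a b *: ee eHs)
  | eG a, eH => Some (- \sum_(m < 2) eps a m *: ee (eP m))
  | eG a, eP b => Some (eps a b *: ee eJs)
  | _, _ => None
  end.

Definition ebr : 'rV[R]_8 -> 'rV[R]_8 -> 'rV[R]_8 :=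
  bil (fun i j => antisym_ext etbl (edec i) (edec j)).

Definition EBsub : {vspace 'rV[R]_22} :=
  <<[:: e gH; e gJ; e (gP ord0); e (gP (i2 1)); e (gG ord0); e (gG (i2 1));
        e gHs; e gJs]>>%VS.

Definition is_lie_bracket n (b : 'rV[R]_n -> 'rV[R]_n -> 'rV[R]_n) : Prop :=
  [/\ (forall (a : R) x y z, b (a *: x + y) z = a *: b x z + b y z),
      (forall (a : R) x y z, b x (a *: y + z) = a *: b x y + b x z),
      (forall x, b x x = 0) &
      (forall x y z, b x (b y z) + b y (b z x) + b z (b x y) = 0)].

Definition is_invariant_metric n (b : 'rV[R]_n -> 'rV[R]_n -> 'rV[R]_n)
    (g : 'rV[R]_n -> 'rV[R]_n -> R) : Prop :=
  [/\ (forall (a : R) x y z, g (a *: x + y) z = a * g x z + g y z),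
      (forall x y, g x y = g y x),
      (forall x, (forall y, g x y = 0) -> x = 0) &
      (forall x y z, g (b z x) y + g x (b z y) = 0)].

Definition is_subalgebra n (b : 'rV[R]_n -> 'rV[R]_n -> 'rV[R]_n) (S : {vspace 'rV[R]_n}) :=
  forall x y, x \in S -> y \in S -> b x y \in S.

Definition lie_iso_onto m n (b1 : 'rV[R]_m -> 'rV[R]_m -> 'rV[R]_m)
    (b2 : 'rV[R]_n -> 'rV[R]_n -> 'rV[R]_n) (S : {vspace 'rV[R]_n})
    (f : 'rV[R]_m -> 'rV[R]_n) : Prop :=
  [/\ (forall (a : R) x y, f (a *: x + y) = a *: f x + f y),
      injective f,
      (forall x, f x \in S),
      (forall s, s \in S -> exists x, f x = s) &
      (forall x y, f (b1 x y) = b2 (f x) (f y))].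

End Algebra.

(* Main.v *)
Require Import Defs.
From HB Require Import structures.
From mathcomp Require Import all_boot all_order all_algebra.
From mathcomp Require Import ring.
Set Implicit Arguments. Unset Strict Implicit. Unset Printing Implicit Defensive.
Import Order.TTheory GRing.Theory Num.Theory.
Local Open Scope ring_scope.


Section Gen.
Variable R : realFieldType.
Variable n : nat.
Variable s : 'I_n -> 'I_n -> 'I_n -> R.

Definition B (x y : 'rV[R]_n) : 'rV[R]_n :=
  \row_l \sum_i \sum_j x 0 i * y 0 j * s i j l.

Lemma BE x y l : B x y 0 l = \sum_i \sum_j x 0 i * y 0 j * s i j l.
Proof. by rewrite mxE. Qed.

Lemma B_linl a x y z : B (a *: x + y) z = a *: B x z + B y z.
Proof.
apply/rowP => l; rewrite !mxE mulr_sumr -big_split /=; apply: eq_bigr => i _.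
rewrite mulr_sumr -big_split /=; apply: eq_bigr => j _; rewrite !mxE; ring.
Qed.

Lemma B_linr a x y z : B x (a *: y + z) = a *: B x y + B x z.
Proof.
apply/rowP => l; rewrite !mxE mulr_sumr -big_split /=; apply: eq_bigr => i _.
rewrite mulr_sumr -big_split /=; apply: eq_bigr => j _; rewrite !mxE; ring.
Qed.

Lemma B_alt (anti : forall i j l, s i j l = - s j i l) x : B x x = 0.
Proof.
apply/rowP => l; rewrite !mxE.
set S := \sum_i _.
have : S = - S.
  rewrite {1}/S exchange_big /= /S -sumrN; apply: eq_bigr => i _.
  rewrite -sumrN; apply: eq_bigr => j _; rewrite anti; ring.
move=> h; have : 2%:R * S = 0 by rewrite mulr2n mulrDl mul1r {1}h addNr.
by move/eqP; rewrite mulf_eq0 pnatr_eq0 /= => /eqP.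
Qed.

Lemma nest (X Y Z : 'I_n -> R) l :
  \sum_i \sum_m X i * (\sum_j \sum_k Y j * Z k * s j k m) * s i m l =
  \sum_i \sum_j \sum_k X i * Y j * Z k * (\sum_m s j k m * s i m l).
Proof.
apply: eq_bigr => i _.
transitivity (\sum_m \sum_j \sum_k X i * Y j * Z k * (s j k m * s i m l)).
  apply: eq_bigr => m _; rewrite mulr_sumr mulr_suml; apply: eq_bigr => j _.
  rewrite mulr_sumr mulr_suml; apply: eq_bigr => k _; ring.
rewrite exchange_big /=; apply: eq_bigr => j _.
rewrite exchange_big /=; apply: eq_bigr => k _.
by rewrite mulr_sumr.
Qed.

Lemma perm1 (F : 'I_n -> 'I_n -> 'I_n -> R) :
  \sum_a \sum_b \sum_c F a b c = \sum_c \sum_a \sum_b F a b c.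
Proof.
under eq_bigr => a _ do rewrite exchange_big /=.
by rewrite exchange_big.
Qed.
Lemma perm2 (F : 'I_n -> 'I_n -> 'I_n -> R) :
  \sum_a \sum_b \sum_c F a b c = \sum_b \sum_c \sum_a F a b c.
Proof.
rewrite exchange_big /=.
by under eq_bigr => b _ do rewrite exchange_big /=.
Qed.

Lemma B_jacobi
  (J : forall i j k l, \sum_m (s j k m * s i m l) + \sum_m (s k i m * s j m l)
         + \sum_m (s i j m * s k m l) = 0) x y z :
  B x (B y z) + B y (B z x) + B z (B x y) = 0.
Proof.
apply/rowP => l; rewrite !mxE.
have E : forall (u v w : 'rV[R]_n),
  \sum_i \sum_m u 0 i * B v w 0 m * s i m l =
  \sum_i \sum_j \sum_k u 0 i * v 0 j * w 0 k * (\sum_m s j k m * s i m l).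
  move=> u v w; rewrite -(nest (fun i => u 0 i) (fun j => v 0 j) (fun k => w 0 k)).
  by apply: eq_bigr => i _; apply: eq_bigr => m _; rewrite BE.
rewrite !E [X in _ + X + _]perm1 [X in _ + _ + X]perm2.
rewrite -!big_split /=; apply: big1 => i _.
rewrite -!big_split /=; apply: big1 => j _.
rewrite -!big_split /=; apply: big1 => k _.
have := J i j k l => h.
transitivity (x 0 i * y 0 j * z 0 k * (\sum_m s j k m * s i m l + \sum_m s k i m * s j m l + \sum_m s i j m * s k m l)).
  ring.
by rewrite h mulr0.
Qed.

Variable m : 'I_n -> 'I_n -> R.
Definition M (x y : 'rV[R]_n) : R := \sum_i \sum_j x 0 i * y 0 j * m i j.

Lemma M_linl a x y z : M (a *: x + y) z = a * M x z + M y z.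
Proof.
rewrite /M mulr_sumr -big_split /=; apply: eq_bigr => i _.
rewrite mulr_sumr -big_split /=; apply: eq_bigr => j _; rewrite !mxE; ring.
Qed.

Lemma M_sym (sy : forall i j, m i j = m j i) x y : M x y = M y x.
Proof.
rewrite /M exchange_big /=; apply: eq_bigr => i _; apply: eq_bigr => j _.
rewrite sy; ring.
Qed.

Lemma M_inv (K : forall i j k, \sum_q (s k i q * m q j) + \sum_q (m i q * s k j q) = 0)
  x y z : M (B z x) y + M x (B z y) = 0.
Proof.
have E1 : M (B z x) y = \sum_i \sum_j \sum_k \sum_q x 0 i * y 0 j * z 0 k * (s k i q * m q j).
  rewrite /M.
  transitivity (\sum_q \sum_j \sum_k \sum_i x 0 i * y 0 j * z 0 k * (s k i q * m q j)).
    apply: eq_bigr => q _; apply: eq_bigr => j _; rewrite BE !mulr_suml.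
    apply: eq_bigr => k _; rewrite !mulr_suml; apply: eq_bigr => i _; ring.
  rewrite exchange_big /=.
  under eq_bigr => j _ do rewrite exchange_big /=.
  under eq_bigr => j _ do under eq_bigr => k _ do rewrite exchange_big /=.
  under eq_bigr => j _ do rewrite exchange_big /=.
  by rewrite exchange_big.
have E2 : M x (B z y) = \sum_i \sum_j \sum_k \sum_q x 0 i * y 0 j * z 0 k * (m i q * s k j q).
  rewrite /M.
  transitivity (\sum_i \sum_q \sum_k \sum_j x 0 i * y 0 j * z 0 k * (m i q * s k j q)).
    apply: eq_bigr => i _; apply: eq_bigr => q _; rewrite BE mulr_sumr !mulr_suml.
    apply: eq_bigr => k _; rewrite mulr_sumr !mulr_suml; apply: eq_bigr => j _; ring.
  apply: eq_bigr => i _.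
  rewrite exchange_big /=.
  under eq_bigr => k _ do rewrite exchange_big /=.
  by rewrite exchange_big.
rewrite E1 E2 -big_split /=; apply: big1 => i _.
rewrite -big_split /=; apply: big1 => j _.
rewrite -big_split /=; apply: big1 => k _.
rewrite -big_split /=.
transitivity (x 0 i * y 0 j * z 0 k * (\sum_q (s k i q * m q j) + \sum_q (m i q * s k j q))).
  by rewrite mulrDr !mulr_sumr -big_split.
by rewrite K mulr0.
Qed.

Lemma M_nondeg (D : R) (W : 'I_n -> 'I_n -> R) (D0 : D != 0)
  (H : forall i0 i, \sum_j m i j * W i0 j = D * (i == i0)%:R) x :
  (forall y, M x y = 0) -> x = 0.
Proof.
move=> hx; apply/rowP => i0; rewrite mxE.
have h : \sum_j W i0 j * M x (delta_mx 0 j) = 0.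
  by apply: big1 => j _; rewrite hx mulr0.
have h2 : \sum_j W i0 j * M x (delta_mx 0 j) = D * x 0 i0.
  transitivity (\sum_i x 0 i * (\sum_j m i j * W i0 j)).
    rewrite /M.
    transitivity (\sum_j \sum_i x 0 i * (m i j * W i0 j)).
      apply: eq_bigr => j _; rewrite mulr_sumr; apply: eq_bigr => i _.
      rewrite (bigD1 j) //= big1 ?addr0; last first.
        by move=> k /negbTE nk; rewrite mxE nk andbF mulr0 mul0r.
      rewrite mxE !eqxx /=; ring.
    rewrite exchange_big /=; apply: eq_bigr => i _; by rewrite mulr_sumr.
  under eq_bigr => i _ do rewrite H.
  rewrite (bigD1 i0) //= big1 ?addr0; last first.
    by move=> k /negbTE nk; rewrite nk mulr0 mulr0.
  by rewrite eqxx mulr1 mulrC.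
by move: h; rewrite h2 => /eqP; rewrite mulf_eq0 (negbTE D0) /= => /eqP.
Qed.
End Gen.


Definition o1 : 'I_2 := lift ord0 ord0.

Lemma sum2 (V : nmodType) (F : 'I_2 -> V) : \sum_(m < 2) F m = F ord0 + F o1.
Proof. by rewrite !big_ord_recl big_ord0 addr0. Qed.

Definition Lin := seq (int * gen).
Definition sg (c : int) (g : gen) : Lin := [:: (c, g)].
Definition scL (c : int) (l : Lin) : Lin := [seq (c * p.1, p.2) | p <- l].
Definition negL (l : Lin) : Lin := scL (-1) l.
Definition s2 (F : 'I_2 -> Lin) : Lin := F ord0 ++ F o1.
Arguments negL : simpl never. Arguments scL : simpl never. Arguments s2 : simpl never. Arguments sg : simpl never.

Definition epsZ (a b : 'I_2) : int := if a == b then 0 else if a == ord0 then 1 else -1.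
Definition deltaZ (a b : 'I_2) : int := (a == b)%:Z.
Definition epsdelZ (a b c d : 'I_2) : int :=
  epsZ a c * deltaZ d b + epsZ a d * deltaZ c b + epsZ b c * deltaZ d a + epsZ b d * deltaZ c a.

Definition tblL (x y : gen) : option Lin :=
  match x, y with
  | gJ, gG a => Some (s2 (fun m => sg (epsZ a m) (gG m)))
  | gJ, gP a => Some (s2 (fun m => sg (epsZ a m) (gP m)))
  | gG a, gH => Some (negL (s2 (fun m => sg (epsZ a m) (gP m))))
  | gG a, gG b => Some (sg (epsZ a b) gHs)
  | gP a, gG b => Some (sg (epsZ a b) gJs)
  | gJ, gJa a => Some (s2 (fun m => sg (epsZ a m) (gJa m)))
  | gJ, gGs a b => Some (negL (s2 (fun m => sg (epsZ m a) (gGs b m) ++ sg (epsZ m b) (gGs a m))))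
  | gJ, gHa a => Some (s2 (fun m => sg (epsZ a m) (gHa m)))
  | gJ, gPs a b => Some (negL (s2 (fun m => sg (epsZ m a) (gPs b m) ++ sg (epsZ m b) (gPs a m))))
  | gG a, gJa b => Some (negL (s2 (fun m => sg (epsZ a m) (gGs b m) ++ sg (epsZ a b) (gGs m m))))
  | gG a, gHa b => Some (negL (s2 (fun m => sg (epsZ a m) (gPs b m) ++ sg (epsZ a b) (gPs m m))))
  | gH, gJa a => Some (s2 (fun m => sg (epsZ a m) (gHa m)))
  | gH, gGs a b => Some (negL (s2 (fun m => sg (epsZ m a) (gPs b m) ++ sg (epsZ m b) (gPs a m))))
  | gP a, gJa b => Some (negL (s2 (fun m => sg (epsZ a m) (gPs b m) ++ sg (epsZ a b) (gPs m m))))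
  | gJa a, gJa b => Some (sg (epsZ a b) gJ)
  | gJa a, gGs b c => Some (s2 (fun m => sg (deltaZ a b * epsZ c m + deltaZ a c * epsZ b m) (gG m)))
  | gJa a, gHa b => Some (sg (epsZ a b) gH)
  | gJa a, gPs b c => Some (s2 (fun m => sg (deltaZ a b * epsZ c m + deltaZ a c * epsZ b m) (gP m)))
  | gGs a b, gHa c => Some (negL (s2 (fun m => sg (deltaZ c a * epsZ b m + deltaZ c b * epsZ a m) (gP m))))
  | gGs a b, gGs c d => Some (sg (epsdelZ a b c d) gHs)
  | gPs a b, gGs c d => Some (sg (epsdelZ a b c d) gJs)
  | gP a, gGs b c => Some (sg (epsZ a b) (gJsa c) ++ sg (epsZ a c) (gJsa b))
  | gG a, gGs b c => Some (sg (epsZ a b) (gHsa c) ++ sg (epsZ a c) (gHsa b))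
  | gG a, gPs b c => Some (sg (epsZ a b) (gJsa c) ++ sg (epsZ a c) (gJsa b))
  | gJ, gHsa a => Some (s2 (fun m => sg (epsZ a m) (gHsa m)))
  | gJ, gJsa a => Some (s2 (fun m => sg (epsZ a m) (gJsa m)))
  | gH, gHsa a => Some (s2 (fun m => sg (epsZ a m) (gJsa m)))
  | gJa a, gJs => Some (negL (s2 (fun m => sg (epsZ a m) (gJsa m))))
  | gJa a, gHs => Some (negL (s2 (fun m => sg (epsZ a m) (gHsa m))))
  | gJa a, gJsa b => Some (sg (epsZ a b) gJs)
  | gJa a, gHsa b => Some (sg (epsZ a b) gHs)
  | gHa a, gHs => Some (negL (s2 (fun m => sg (epsZ a m) (gJsa m))))
  | gHa a, gHsa b => Some (sg (epsZ a b) gJs)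
  | _, _ => None
  end.

Section Interp.
Variable R : realFieldType.

Definition interp (l : Lin) : 'rV[R]_22 := \sum_(p <- l) p.1%:~R *: e R p.2.

Lemma interp_cat l1 l2 : interp (l1 ++ l2) = interp l1 + interp l2.
Proof. by rewrite /interp big_cat. Qed.
Lemma interp_sg c g : interp (sg c g) = c%:~R *: e R g.
Proof. by rewrite /interp big_seq1. Qed.
Lemma interp_cons c g l : interp ((c, g) :: l) = c%:~R *: e R g + interp l.
Proof. by rewrite /interp big_cons. Qed.
Lemma interp_nil : interp [::] = 0.
Proof. by rewrite /interp big_nil. Qed.
Lemma interp_sc c l : interp (scL c l) = c%:~R *: interp l.
Proof.
rewrite /interp big_map scaler_sumr; apply: eq_bigr => p _.
by rewrite intrM scalerA.
Qed.
Lemma interp_neg l : interp (negL l) = - interp l.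
Proof. by rewrite interp_sc scaleN1r. Qed.
Lemma interp_s2 F : interp (s2 F) = interp (F ord0) + interp (F o1).
Proof. exact: interp_cat. Qed.

Lemma epsE a b : eps R a b = (epsZ a b)%:~R.
Proof. by rewrite /eps /epsZ; case: eqP => //; case: eqP. Qed.
Lemma deltaE a b : delta R a b = (deltaZ a b)%:~R.
Proof. by []. Qed.
Lemma epsdelE a b c d : epsdel R a b c d = (epsdelZ a b c d)%:~R.
Proof. by rewrite /epsdel /epsdelZ !intrD !intrM !epsE !deltaE. Qed.

Lemma tblE x y : tbl R x y = omap interp (tblL x y).
Proof.
case: x => [||a|a|a|a|a b|a b|||a|a]; case: y => [||c|c|c|c|c d|c d|||c|c] //=;
  congr Some;
  rewrite ?interp_neg ?interp_s2 ?interp_cat ?interp_cons ?interp_sg ?interp_nil ?addr0 ?sum2 ?intrD ?intrM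
    -?epsE -?deltaE -?epsdelE //.



Qed.
End Interp.


Definition i2' (k : nat) : 'I_2 := if k == 1%N then o1 else ord0.
Lemma i2E k : i2 k = i2' k.
Proof.
apply: val_inj; rewrite /i2 /i2' /=.
case: (ltnP k 2) => hk.
  by rewrite inordK //; case: k hk => [|[|]].
rewrite /inord /insubd insubN; last by rewrite -leqNgt.
by case: k hk => [|[|k]].
Qed.

Definition dec' (k : nat) : gen :=
  if k == 0%N then gJ else if k == 1%N then gH
  else if (k < 4)%N then gG (i2' (k - 2))
  else if (k < 6)%N then gP (i2' (k - 4))
  else if (k < 8)%N then gJa (i2' (k - 6))
  else if (k < 10)%N then gHa (i2' (k - 8))
  else if (k < 13)%N then gGs (i2' ((k - 10) %/ 2)) (i2' (minn (k - 10) 1))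
  else if (k < 16)%N then gPs (i2' ((k - 13) %/ 2)) (i2' (minn (k - 13) 1))
  else if k == 16%N then gJs else if k == 17%N then gHs
  else if (k < 20)%N then gJsa (i2' (k - 18))
  else gHsa (i2' (k - 20)).
Lemma decE (i : 'I_22) : dec i = dec' i.
Proof. by rewrite /dec /dec' /symgen !i2E. Qed.

Definition idxN (g : gen) : nat :=
  match g with
  | gJ => 0 | gH => 1
  | gG a => 2 + a | gP a => 4 + a
  | gJa a => 6 + a | gHa a => 8 + a
  | gGs a b => 10 + symidx a b | gPs a b => 13 + symidx a b
  | gJs => 16 | gHs => 17
  | gJsa a => 18 + a | gHsa a => 20 + a
  end.
Lemma idxE g : nat_of_ord (idx g) = idxN g.
Proof.
case: g => [||a|a|a|a|a b|a b|||a|a] /=; rewrite inordK //;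
  rewrite ?/symidx; case: a => [[|[|]]] //=; try case: b => [[|[|]]] //=.
Qed.

Definition cL x y : Lin := match tblL x y with Some l => l | None =>
  match tblL y x with Some l => negL l | None => [::] end end.
Definition coefL (k : nat) (l : Lin) : int :=
  foldr (fun p acc => (if idxN p.2 == k then p.1 else 0) + acc) 0 l.
Definition cN (i j k : nat) : int := coefL k (cL (dec' i) (dec' j)).

Definition sumN n (f : nat -> int) := foldr (fun m a => f m + a) 0 (iota 0 n).
Definition allN n (P : nat -> bool) := all P (iota 0 n).


Definition tab := [seq [seq [seq cN i j k | k <- iota 0 22] | j <- iota 0 22] | i <- iota 0 22].
Definition lk (T : seq (seq (seq int))) i j k := nth 0 (nth [::] (nth [::] T i) j) k.
Definition sp (r : seq int) : seq (nat * int) :=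
  [seq (m, nth 0 r m) | m <- iota 0 22 & nth 0 r m != 0].
Definition ssum (S : seq (nat * int)) (f : nat -> int) : int :=
  foldr (fun p a => p.2 * f p.1 + a) 0 S.
Definition jacC := let T := tab in
  allN 22 (fun i => allN 22 (fun j => allN 22 (fun k =>
   let Sjk := sp (nth [::] (nth [::] T j) k) in
   let Ski := sp (nth [::] (nth [::] T k) i) in
   let Sij := sp (nth [::] (nth [::] T i) j) in
   allN 22 (fun l =>
   ssum Sjk (fun m => lk T i m l) + ssum Ski (fun m => lk T j m l)
   + ssum Sij (fun m => lk T k m l) == 0)))).
Definition antiC := allN 22 (fun i => allN 22 (fun j => allN 22 (fun k => cN i j k == - cN j i k))).

Definition mtblL (x y : gen) : option int :=
  match x, y with
  | gP a, gG b => Some (3 * deltaZ a b)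
  | gPs a b, gGs c d =>
      Some (3 * (deltaZ a c * deltaZ d b + deltaZ a d * deltaZ c b) - 2 * (deltaZ a b * deltaZ c d))
  | gH, gHs => Some 3
  | gJ, gJs => Some 3
  | gHa a, gHsa b => Some (3 * deltaZ a b)
  | gJa a, gJsa b => Some (3 * deltaZ a b)
  | _, _ => None
  end.
Definition symL x y : int := match mtblL x y with Some v => v | None =>
  match mtblL y x with Some v => v | None => 0 end end.
Definition mN i j := symL (dec' i) (dec' j).
Definition symC := allN 22 (fun i => allN 22 (fun j => mN i j == mN j i)).
Definition invC := let T := tab in allN 22 (fun i => allN 22 (fun j => allN 22 (fun k =>
  sumN 22 (fun q => lk T k i q * mN q j) + sumN 22 (fun q => mN i q * lk T k j q) == 0))).
Definition phi (z : int) : int := if z == 3 then 4 else if z == 4 then 4 else if z == -2 then 2 else 0.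
Definition Wn i0 j := phi (mN i0 j).
Definition ndC := allN 22 (fun i0 => allN 22 (fun i =>
  sumN 22 (fun j => mN i j * Wn i0 j) == 12 * (i == i0)%:Z)).

Definition ELin := seq (int * egen).
Definition esg (c : int) (g : egen) : ELin := [:: (c, g)].
Definition enegL (l : ELin) : ELin := [seq (-1 * p.1, p.2) | p <- l].
Definition es2 (F : 'I_2 -> ELin) : ELin := F ord0 ++ F o1.
Arguments enegL : simpl never. Arguments es2 : simpl never. Arguments esg : simpl never.
Definition etblL (x y : egen) : option ELin :=
  match x, y with
  | eJ, eG a => Some (es2 (fun m => esg (epsZ a m) (eG m)))
  | eJ, eP a => Some (es2 (fun m => esg (epsZ a m) (eP m)))
  | eG a, eG b => Some (esg (epsZ a b) eHs)
  | eG a, eH => Some (enegL (es2 (fun m => esg (epsZ a m) (eP m))))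
  | eG a, eP b => Some (esg (epsZ a b) eJs)
  | _, _ => None
  end.
Definition edec' (k : nat) : egen :=
  if k == 0%N then eJ else if k == 1%N then eH
  else if (k < 4)%N then eG (i2' (k - 2))
  else if (k < 6)%N then eP (i2' (k - 4))
  else if k == 6%N then eJs else eHs.
Definition eidxN (g : egen) : nat :=
  match g with eJ => 0 | eH => 1 | eG a => 2 + a | eP a => 4 + a | eJs => 6 | eHs => 7 end.
Definition ecL x y : ELin := match etblL x y with Some l => l | None =>
  match etblL y x with Some l => enegL l | None => [::] end end.
Definition ecoefL (k : nat) (l : ELin) : int :=
  foldr (fun p acc => (if eidxN p.2 == k then p.1 else 0) + acc) 0 l.
Definition ecN (i j k : nat) : int := ecoefL k (ecL (edec' i) (edec' j)).
Definition embg (g : egen) : gen :=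
  match g with eJ => gJ | eH => gH | eG a => gG a | eP a => gP a | eJs => gJs | eHs => gHs end.
Definition embN k := idxN (embg (edec' k)).
Definition homC := allN 8 (fun i => allN 8 (fun j => allN 22 (fun l =>
  sumN 8 (fun k => ecN i j k * (embN k == l)%:Z) == cN (embN i) (embN j) l))).
Definition glist := [:: gH; gJ; gP ord0; gP (i2' 1); gG ord0; gG (i2' 1); gHs; gJs].
Definition injC := allN 8 (fun k => allN 8 (fun k' => (embN k == embN k') == (k == k'))).
Definition ontoC := allN 8 (fun t => has (fun k => embN k == idxN (nth gJ glist t)) (iota 0 8)).
Definition inSC := allN 8 (fun k => has (fun t => idxN (nth gJ glist t) == embN k) (iota 0 8)).


Lemma jacC_ok : jacC. Proof. by vm_compute. Qed.
Lemma antiC_ok : antiC. Proof. by vm_compute. Qed.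
Lemma symC_ok : symC. Proof. by vm_compute. Qed.
Lemma invC_ok : invC. Proof. by vm_compute. Qed.
Lemma ndC_ok : ndC. Proof. by vm_compute. Qed.
Lemma homC_ok : homC. Proof. by vm_compute. Qed.
Lemma injC_ok : injC. Proof. by vm_compute. Qed.
Lemma ontoC_ok : ontoC. Proof. by vm_compute. Qed.
Lemma inSC_ok : inSC. Proof. by vm_compute. Qed.


Lemma allNP n P : allN n P -> forall i, (i < n)%N -> P i.
Proof. by move/allP=> h i hi; apply: h; rewrite mem_iota add0n. Qed.

Lemma sumNE n (F : nat -> int) : sumN n F = \sum_(m < n) F m.
Proof.
rewrite /sumN -(big_mkord xpredT) /index_iota subn0.
by elim: (iota 0 n) => [|a s IH] /=; rewrite ?big_nil ?big_cons ?IH.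
Qed.

Lemma eq_sumN n F G : (forall m, (m < n)%N -> F m = G m) -> sumN n F = sumN n G.
Proof. by move=> h; rewrite !sumNE; apply: eq_bigr => m _; apply: h. Qed.

Lemma lkE i j k : (i < 22)%N -> (j < 22)%N -> (k < 22)%N -> lk tab i j k = cN i j k.
Proof.
move=> hi hj hk.
by rewrite /lk /tab (nth_map 0) ?size_iota // nth_iota // (nth_map 0) ?size_iota //
  nth_iota // (nth_map 0) ?size_iota // nth_iota.
Qed.

Lemma ssum_sp (r : seq int) (f : nat -> int) :
  sumN 22 (fun m => nth 0 r m * f m) = ssum (sp r) f.
Proof.
rewrite /sumN /sp /ssum; elim: (iota 0 22) => [|a s IH] //=.
by case: eqP => [->|_] /=; rewrite IH // mul0r add0r.
Qed.

Lemma jacZ i j k l : (i < 22)%N -> (j < 22)%N -> (k < 22)%N -> (l < 22)%N ->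
  sumN 22 (fun m => cN j k m * cN i m l) + sumN 22 (fun m => cN k i m * cN j m l)
   + sumN 22 (fun m => cN i j m * cN k m l) = 0.
Proof.
move=> hi hj hk hl.
have := allNP (allNP (allNP (allNP jacC_ok hi) hj) hk) hl.
rewrite -!ssum_sp => /eqP <-.
congr (_ + _ + _); apply: eq_sumN => m hm; rewrite /lk -/(lk tab _ _ _) -/(lk tab _ _ _) !lkE //.
Qed.

Lemma antiZ i j k : (i < 22)%N -> (j < 22)%N -> (k < 22)%N -> cN i j k = - cN j i k.
Proof. by move=> hi hj hk; apply/eqP; apply: (allNP (allNP (allNP antiC_ok hi) hj) hk). Qed.

Section RR.
Variable R : realFieldType.
Definition sR (i j k : 'I_22) : R := (cN i j k)%:~R.

Lemma antiE x y : antisym_ext (tbl R) x y = interp R (cL x y).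
Proof.
rewrite /antisym_ext !tblE /cL; case: (tblL x y) => //= ; case: (tblL y x) => //=.
  by move=> l; rewrite interp_neg.
by rewrite interp_nil.
Qed.

Lemma interp_row l : interp R l = \row_k (coefL k l)%:~R.
Proof.
elim: l => [|[c g] l IH].
  by rewrite interp_nil; apply/rowP => k; rewrite !mxE.
rewrite interp_cons IH; apply/rowP => k; rewrite !mxE /= intrD -idxE.
have -> : (nat_of_ord (idx g) == nat_of_ord k) = (k == idx g) by rewrite eq_sym.
by case: (k == idx g); rewrite ?mulr1 ?mulr0.
Qed.

Lemma brE x y : @br R x y = B sR x y.
Proof.
apply/rowP => l; rewrite BE /br /bil summxE; apply: eq_bigr => i _.
rewrite summxE; apply: eq_bigr => j _.
by rewrite !mxE antiE interp_row mxE /sR /cN !decE.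
Qed.

Lemma br_lie : is_lie_bracket (@br R).
Proof.
split.
- by move=> a x y z; rewrite !brE B_linl.
- by move=> a x y z; rewrite !brE B_linr.
- move=> x; rewrite brE; apply: B_alt => i j k.
  by rewrite /sR antiZ // intrN.
- move=> x y z; rewrite !brE; apply: B_jacobi => i j k l.
  have := jacZ (ltn_ord i) (ltn_ord j) (ltn_ord k) (ltn_ord l).
  rewrite !sumNE => /(congr1 (fun z : int => (z%:~R : R))).
  by rewrite !intrD !rmorph_sum /= !(eq_bigr _ (fun m _ => intrM _ _ _)).
Qed.

Lemma mtblE x y : mtbl R x y = omap (fun z : int => z%:~R / 3) (mtblL x y).
Proof.
have h3 : (3 : R) != 0 by rewrite pnatr_eq0.
case: x => [||a|a|a|a|a b|a b|||a|a]; case: y => [||c|c|c|c|c d|c d|||c|c] //=;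
  congr Some; rewrite ?intrB ?intrM -?deltaE; by field.

Qed.

Lemma symE x y : sym_ext (mtbl R) x y = (symL x y)%:~R / 3.
Proof.
rewrite /sym_ext !mtblE /symL; case: (mtblL x y) => //=; case: (mtblL y x) => //=.
by rewrite mul0r.
Qed.

Definition mR (i j : 'I_22) : R := (mN i j)%:~R / 3.

Lemma metE x y : @met R x y = M mR x y.
Proof.
rewrite /met /bilf /M; apply: eq_bigr => i _; apply: eq_bigr => j _.
by rewrite symE !decE.
Qed.

Lemma met_inv : is_invariant_metric (@br R) (@met R).
Proof.
split.
- by move=> a x y z; rewrite !metE M_linl.
- move=> x y; rewrite !metE; apply: M_sym => i j.
  by rewrite /mR; have /eqP -> := allNP (allNP symC_ok (ltn_ord i)) (ltn_ord j).
- move=> x hx.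
  apply: (@M_nondeg R 22 mR 4 (fun i0 j => (Wn i0 j)%:~R));
    [by rewrite pnatr_eq0 | | by move=> y; rewrite -metE].
  move=> i0 i.
  have := allNP (allNP ndC_ok (ltn_ord i0)) (ltn_ord i) => /eqP.
  rewrite sumNE => /(congr1 (fun z : int => (z%:~R : R))).
  rewrite rmorph_sum /= (eq_bigr _ (fun m _ => intrM _ _ _)) => h.
  transitivity ((\sum_(j < 22) (mN i j)%:~R * (Wn i0 j)%:~R) / 3 : R).
    by rewrite mulr_suml; apply: eq_bigr => j _; rewrite /mR mulrAC.
  rewrite h.
  have -> : (nat_of_ord i == nat_of_ord i0) = (i == i0) by [].
  have h3 : (3 : R) != 0 by rewrite pnatr_eq0.
  by case: (i == i0); rewrite ?intrM /=; field.
- move=> x y z; rewrite !metE !brE; apply: M_inv => i j k.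
  have := allNP (allNP (allNP invC_ok (ltn_ord i)) (ltn_ord j)) (ltn_ord k) => /eqP.
  rewrite (eq_sumN (G := fun q => cN k i q * mN q j)); last first.
    by move=> q hq; rewrite lkE.
  rewrite (eq_sumN (F := fun q => mN i q * lk tab k j q) (G := fun q => mN i q * cN k j q)); last first.
    by move=> q hq; rewrite lkE.
  rewrite !sumNE => /(congr1 (fun z : int => (z%:~R : R))).
  rewrite intrD !rmorph_sum /= !(eq_bigr _ (fun m _ => intrM _ _ _)) => h.
  transitivity ((\sum_(q < 22) (cN k i q)%:~R * (mN q j)%:~R
     + \sum_(q < 22) (mN i q)%:~R * (cN k j q)%:~R) / 3 : R).
    rewrite mulrDl !mulr_suml; congr (_ + _); apply: eq_bigr => q _;
      rewrite /sR /mR; ring.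
  by rewrite h mul0r.
Qed.
End RR.


Lemma edecE (i : 'I_8) : edec i = edec' i.
Proof. by rewrite /edec /edec' !i2E. Qed.

Lemma eidxE g : nat_of_ord (eidx g) = eidxN g.
Proof.
by case: g => [||a|a||] /=; rewrite inordK //; case: a => [[|[|]]].
Qed.

Section ER.
Variable R : realFieldType.
Definition einterp (l : ELin) : 'rV[R]_8 := \sum_(p <- l) p.1%:~R *: ee R p.2.
Lemma einterp_nil : einterp [::] = 0.
Proof. by rewrite /einterp big_nil. Qed.
Lemma einterp_cons c g l : einterp ((c, g) :: l) = c%:~R *: ee R g + einterp l.
Proof. by rewrite /einterp big_cons. Qed.
Lemma einterp_cat l1 l2 : einterp (l1 ++ l2) = einterp l1 + einterp l2.
Proof. by rewrite /einterp big_cat. Qed.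
Lemma einterp_sg c g : einterp (esg c g) = c%:~R *: ee R g.
Proof. by rewrite /einterp big_seq1. Qed.
Lemma einterp_neg l : einterp (enegL l) = - einterp l.
Proof.
rewrite /einterp big_map -sumrN; apply: eq_bigr => p _.
by rewrite /= intrM intrN mulN1r scaleNr.
Qed.
Lemma einterp_s2 F : einterp (es2 F) = einterp (F ord0) + einterp (F o1).
Proof. exact: einterp_cat. Qed.

Lemma etblE x y : etbl R x y = omap einterp (etblL x y).
Proof.
case: x => [||a|a||]; case: y => [||c|c||] //=;
  congr Some;
  rewrite ?einterp_neg ?einterp_s2 ?einterp_cat ?einterp_cons ?einterp_sg ?einterp_nil ?addr0 ?sum2
    -?epsE //.
Qed.

Lemma eantiE x y : antisym_ext (etbl R) x y = einterp (ecL x y).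
Proof.
rewrite /antisym_ext !etblE /ecL; case: (etblL x y) => //= ; case: (etblL y x) => //=.
  by move=> l; rewrite einterp_neg.
by rewrite einterp_nil.
Qed.

Lemma einterp_row l : einterp l = \row_k (ecoefL k l)%:~R.
Proof.
elim: l => [|[c g] l IH].
  by rewrite einterp_nil; apply/rowP => k; rewrite !mxE.
rewrite einterp_cons IH; apply/rowP => k; rewrite !mxE /= intrD -eidxE.
have -> : (nat_of_ord (eidx g) == nat_of_ord k) = (k == eidx g) by rewrite eq_sym.
by case: (k == eidx g); rewrite ?mulr1 ?mulr0.
Qed.

Definition esR (i j k : 'I_8) : R := (ecN i j k)%:~R.
Lemma ebrE x y : @ebr R x y = B esR x y.
Proof.
apply/rowP => l; rewrite BE /ebr /bil summxE; apply: eq_bigr => i _.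
rewrite summxE; apply: eq_bigr => j _.
by rewrite !mxE eantiE einterp_row mxE /esR /ecN !edecE.
Qed.
End ER.


Section FR.
Variable R : realFieldType.
Definition embO (k : 'I_8) : 'I_22 := idx (embg (edec k)).
Lemma embOE k : nat_of_ord (embO k) = embN k.
Proof. by rewrite /embO idxE edecE. Qed.
Definition Emb : 'M[R]_(8,22) := \matrix_(k, l) (embO k == l)%:R.
Definition fE (v : 'rV[R]_8) : 'rV[R]_22 := v *m Emb.

Lemma fE_entry v l : fE v 0 l = \sum_k v 0 k * (embO k == l)%:R.
Proof. by rewrite !mxE; apply: eq_bigr => k _; rewrite mxE. Qed.

Lemma collapse (Gf : 'I_22 -> R) j : \sum_b (embO j == b)%:R * Gf b = Gf (embO j).
Proof.
rewrite (bigD1 (embO j)) //= eqxx mul1r big1 ?addr0 // => b /negbTE nb.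
by rewrite eq_sym nb mul0r.
Qed.

Lemma pull (Y : 'I_8 -> R) (Gf : 'I_22 -> R) :
  \sum_b (\sum_j Y j * (embO j == b)%:R) * Gf b = \sum_j Y j * Gf (embO j).
Proof.
under eq_bigr => b _ do rewrite mulr_suml.
rewrite exchange_big /=; apply: eq_bigr => j _.
rewrite -collapse mulr_sumr; apply: eq_bigr => b _; by rewrite mulrA.
Qed.

Lemma fE_hom x y : fE (@ebr R x y) = @br R (fE x) (fE y).
Proof.
apply/rowP => l; rewrite brE BE fE_entry.
transitivity (\sum_i x 0 i * \sum_j y 0 j * sR R (embO i) (embO j) l); last first.
  transitivity (\sum_a fE x 0 a * (\sum_b fE y 0 b * sR R a b l)).
    under [RHS]eq_bigr => a _.
      under eq_bigr => b _ do rewrite fE_entry.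
      rewrite pull.
    over.
    under eq_bigr => a _ do rewrite fE_entry.
    by rewrite pull.
  apply: eq_bigr => a _; rewrite mulr_sumr; apply: eq_bigr => b _; by rewrite mulrA.
under eq_bigr => k _ do rewrite ebrE BE !mulr_suml.
under eq_bigr => k _ do under eq_bigr => i _ do rewrite mulr_suml.
rewrite perm2; apply: eq_bigr => i _.
rewrite mulr_sumr; apply: eq_bigr => j _.
transitivity (x 0 i * y 0 j * \sum_k esR R i j k * (embO k == l)%:R).
  by rewrite mulr_sumr; apply: eq_bigr => k _; ring.
have := allNP (allNP (allNP homC_ok (ltn_ord i)) (ltn_ord j)) (ltn_ord l) => /eqP.
rewrite sumNE => /(congr1 (fun z : int => (z%:~R : R))).
rewrite rmorph_sum /= => h.
rewrite mulrA; congr (_ * _).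
rewrite /sR !embOE -h; apply: eq_bigr => k _.
rewrite intrM /esR -val_eqE /= embOE; by case: (_ == _).
Qed.

Lemma fE_lin a x y : fE (a *: x + y) = a *: fE x + fE y.
Proof. by rewrite /fE mulmxDl scalemxAl. Qed.

Lemma fE_at v k : fE v 0 (embO k) = v 0 k.
Proof.
rewrite fE_entry (bigD1 k) //= eqxx mulr1 big1 ?addr0 // => k' nk.
have := allNP (allNP injC_ok (ltn_ord k')) (ltn_ord k) => /eqP.
rewrite -!embOE => h.
have -> : (embO k' == embO k) = false.
  by rewrite -val_eqE /= h; apply/negbTE.
by rewrite mulr0.
Qed.

Lemma fE_inj : injective fE.
Proof. by move=> x y h; apply/rowP => k; rewrite -!fE_at h. Qed.

Lemma e_idx g1 g2 : nat_of_ord (idx g1) = nat_of_ord (idx g2) -> e R g1 = e R g2.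
Proof. by move=> h; rewrite /e (val_inj h). Qed.

Lemma fE_delta k : fE (delta_mx 0 k) = e R (embg (edec k)).
Proof.
apply/rowP => l; rewrite /fE -rowE !mxE /=.
by rewrite eq_sym.
Qed.

Lemma EBsubE : EBsub R = <<map (e R) glist>>%VS.
Proof. by rewrite /EBsub i2E. Qed.

Lemma eIn k : e R (embg (edec k)) \in EBsub R.
Proof.
have := allNP inSC_ok (ltn_ord k) => /hasP [t]; rewrite mem_iota add0n => /andP [_ ht] /eqP h.
have -> : e R (embg (edec k)) = e R (nth gJ glist t).
  by apply: e_idx; rewrite [RHS]idxE h -embOE /embO idxE.
rewrite EBsubE; apply: memv_span.
by rewrite -(nth_map gJ 0) //; apply: mem_nth; rewrite size_map.
Qed.

Lemma fE_in x : fE x \in EBsub R.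
Proof.
rewrite [x]row_sum_delta /fE mulmx_suml; apply: rpred_sum => k _.
by rewrite -scalemxAl -/(fE _) fE_delta; apply: rpredZ; apply: eIn.
Qed.

Lemma fE_onto s : s \in EBsub R -> exists x, fE x = s.
Proof.
rewrite EBsubE => hs.
have := coord_span (X := in_tuple (map (e R) glist)) hs => ->.
pose P t := fun k => embN k == idxN (nth gJ glist t).
pose pre t : 'I_8 := inord (find (P t) (iota 0 8)).
exists (\sum_t coord (in_tuple (map (e R) glist)) t s *: delta_mx 0 (pre t)).
rewrite /fE mulmx_suml; apply: eq_bigr => t _.
rewrite -scalemxAl -/(fE _) fE_delta; congr (_ *: _).
have ht : (t < 8)%N := ltn_ord t.
have hh : has (P t) (iota 0 8) := allNP ontoC_ok ht.
have hf : (find (P t) (iota 0 8) < 8)%N by move: hh; rewrite has_find size_iota.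
have := nth_find 0 hh; rewrite nth_iota // add0n /P => /eqP h.
rewrite (nth_map gJ) //; apply: e_idx.
have := embOE (pre t); rewrite /embO => ->.
by rewrite /pre inordK // h idxE.
Qed.
End FR.

Theorem mainTheorem10 (R : realFieldType) :
  [/\ is_lie_bracket (@br R),
      is_invariant_metric (@br R) (@met R),
      is_subalgebra (@br R) (@EBsub R) &
      exists f : 'rV[R]_8 -> 'rV[R]_22, lie_iso_onto (@ebr R) (@br R) (@EBsub R) f].
Proof.
split.
- exact: br_lie.
- exact: met_inv.
- move=> x y hx hy.
  have [x' <-] := fE_onto hx; have [y' <-] := fE_onto hy.
  rewrite -fE_hom; exact: fE_in.
- exists (@fE R); split.
  + exact: fE_lin.
  + exact: fE_inj.
  + exact: fE_in.
  + exact: fE_onto.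
  + exact: fE_hom.
Qed.
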